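(* Let $(\mathcal{S},\mathcal{R})$ be a complete positive presentation satisfying: (F$_r$) the closure of $\mathcal{S}$ under $r$-reversing is finite; (C) $\mathcal{R}$ contains no relation of the form $su=sv$ or $us=vs$ with $s\in\mathcal{S}$, $u,v\in\mathcal{S}^*$ and $u\neq v$; (E$_r$) there exists a set $\mathcal{S}'$ with $\mathcal{S}\subseteq\mathcal{S}'\subseteq\mathcal{S}^*$ such that for all $u,v\in\mathcal{S}'$ there exist $u',v'\in\mathcal{S}'$ satisfying $(uv')^{-1}(vu')\curvearrowright_r\varepsilon$. Then the group $\mathrm{Gr}(\mathcal{S};\mathcal{R})$ satisfies a quadratic isoperimetric inequality.
   Context: A positive presentation is a pair $(\mathcal{S},\mathcal{R})$ where $\mathcal{S}$ is a nonempty set of letters and $\mathcal{R}$ is a family of relations $u=v$, i.e. unordered pairs $\{u,v\}$ of nonempty words in the free monoid $\mathcal{S}^*$ (letters are regarded as length-one words). $\varepsilon$ denotes the empty word; $\equiv$ is the smallest congruence on $\mathcal{S}^*$ containing all pairs of $\mathcal{R}$. Let $\mathcal{S}^{-1}=\{s^{-1}:s\in\mathcal{S}\}$ be a disjoint copy of $\mathcal{S}$; $\equiv^{\pm}$ is the smallest congruence on $(\mathcal{S}\cup\mathcal{S}^{-1})^*$ containing all pairs of $\mathcal{R}$ and all pairs $\{ss^{-1},\varepsilon\}$, $\{s^{-1}s,\varepsilon\}$; $\mathrm{Gr}(\mathcal{S};\mathcal{R})=(\mathcal{S}\cup\mathcal{S}^{-1})^*/{\equiv^{\pm}}$. For $u\in\mathcal{S}^*$,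 $u^{-1}$ is obtained by reversing the order of the letters of $u$ and replacing each $s$ by $s^{-1}$. Right reversing: $\mathbf{w}\curvearrowright_r\mathbf{w}'$ (words on $\mathcal{S}\cup\mathcal{S}^{-1}$) if $\mathbf{w}'$ is obtained from $\mathbf{w}$ by finitely many steps, each deleting a subword $u^{-1}u$ ($u\in\mathcal{S}^*$ nonempty) or replacing a subword $u^{-1}v$ ($u,v\in\mathcal{S}^*$ nonempty) by $v'u'^{-1}$ where $uv'=vu'$ is a relation of $\mathcal{R}$. Left reversing: $\mathbf{w}\curvearrowright_l\mathbf{w}'$ if $\mathbf{w}'$ is obtained by finitely many steps, each deleting a subword $uu^{-1}$ ($u$ nonempty) or replacing a subword $uv^{-1}$ ($u,v$ nonempty) by $v'^{-1}u'$ where $v'u=u'v$ is a relation of $\mathcal{R}$. $(\mathcal{S},\mathcal{R})$ is $r$-complete if for all $u,v,u',v'\in\mathcal{S}^*$ with $uv'\equiv vu'$ there exist $u'',v'',w\in\mathcal{S}^*$ with $u^{-1}v\curvearrowright_r v''u''^{-1}$, $u'\equiv u''w$, $v'\equiv v''w$; it is $l$-complete if for all $u,v,u',v'$ with $v'u\equiv u'v$ there exist $u'',v'',w$ with $uv^{-1}\curvearrowright_l v''^{-1}u''$, $u'\equiv wu''$, $v'\equiv wv''$; it is complete if it is both. A subset $X\subseteq\mathcal{S}^*$ is closed under $r$-reversing if $u',v'\in X$ whenever $u,v\in X$ and $u^{-1}v\curvearrowright_r v'u'^{-1}$ with $u',v'\in\mathcal{S}^*$; the closure of $\mathcal{S}$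 under $r$-reversing is the smallest such subset containing $\mathcal{S}$. The group satisfies a quadratic isoperimetric inequality if there is a constant $C$ such that every word $\mathbf{w}$ of length $n$ on $\mathcal{S}\cup\mathcal{S}^{-1}$ with $\mathbf{w}\equiv^{\pm}\varepsilon$ can be transformed into $\varepsilon$ using at most $Cn^2$ applications of relations of $\mathcal{R}$ (together with free insertions/deletions of $ss^{-1}$, $s^{-1}s$). *)

(* Defs.v *)
From Stdlib Require Import List.
Import ListNotations.
Set Implicit Arguments.

Section Pres.
Variable S : Type.

Inductive sletter : Type := Pos : S -> sletter | Neg : S -> sletter.

Definition sword := list sletter.

Definition pos (u : list S) : sword := map Pos u.
Definition inv (u : list S) : sword := rev (map Neg u).

(* A family of relations: R u v means the relation u = v is in the family.
   Relations are unordered pairs, so we use the symmetric closure. *)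
Variable R : list S -> list S -> Prop.
Definition is_rel (u v : list S) : Prop := R u v \/ R v u.

Definition positive_relations : Prop :=
  forall u v, R u v -> u <> [] /\ v <> [].

Inductive pequiv : list S -> list S -> Prop :=
| pequiv_refl : forall u, pequiv u u
| pequiv_sym : forall u v, pequiv u v -> pequiv v u
| pequiv_trans : forall u v w, pequiv u v -> pequiv v w -> pequiv u w
| pequiv_rel : forall x y u v, is_rel u v -> pequiv (x ++ u ++ y) (x ++ v ++ y).

Inductive gequiv : sword -> sword -> Prop :=
| gequiv_refl : forall w, gequiv w w
| gequiv_sym : forall w w', gequiv w w' -> gequiv w' w
| gequiv_trans : forall w1 w2 w3, gequiv w1 w2 -> gequiv w2 w3 -> gequiv w1 w3
| gequiv_rel : forall x y u v, is_rel u v ->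
    gequiv (x ++ pos u ++ y) (x ++ pos v ++ y)
| gequiv_free1 : forall x y s, gequiv (x ++ [Pos s; Neg s] ++ y) (x ++ y)
| gequiv_free2 : forall x y s, gequiv (x ++ [Neg s; Pos s] ++ y) (x ++ y).

Inductive rrev_step : sword -> sword -> Prop :=
| rrev_del : forall x y u, u <> [] ->
    rrev_step (x ++ inv u ++ pos u ++ y) (x ++ y)
| rrev_sw : forall x y u v u' v', u <> [] -> v <> [] -> is_rel (u ++ v') (v ++ u') ->
    rrev_step (x ++ inv u ++ pos v ++ y) (x ++ pos v' ++ inv u' ++ y).

Inductive lrev_step : sword -> sword -> Prop :=
| lrev_del : forall x y u, u <> [] ->
    lrev_step (x ++ pos u ++ inv u ++ y) (x ++ y)
| lrev_sw : forall x y u v u' v', u <> [] -> v <> [] -> is_rel (v' ++ u) (u' ++ v) ->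
    lrev_step (x ++ pos u ++ inv v ++ y) (x ++ inv v' ++ pos u' ++ y).

Inductive rrev : sword -> sword -> Prop :=
| rrev_refl : forall w, rrev w w
| rrev_cons : forall w1 w2 w3, rrev_step w1 w2 -> rrev w2 w3 -> rrev w1 w3.

Inductive lrev : sword -> sword -> Prop :=
| lrev_refl : forall w, lrev w w
| lrev_cons : forall w1 w2 w3, lrev_step w1 w2 -> lrev w2 w3 -> lrev w1 w3.

Definition r_complete : Prop :=
  forall u v u' v', pequiv (u ++ v') (v ++ u') ->
  exists u'' v'' w, rrev (inv u ++ pos v) (pos v'' ++ inv u'') /\
    pequiv u' (u'' ++ w) /\ pequiv v' (v'' ++ w).

Definition l_complete : Prop :=
  forall u v u' v', pequiv (v' ++ u) (u' ++ v) ->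
  exists u'' v'' w, lrev (pos u ++ inv v) (inv v'' ++ pos u'') /\
    pequiv u' (w ++ u'') /\ pequiv v' (w ++ v'').

Definition complete : Prop := r_complete /\ l_complete.

Inductive rclosure : list S -> Prop :=
| rclos_letter : forall s, rclosure [s]
| rclos_num : forall u v u' v', rclosure u -> rclosure v ->
    rrev (inv u ++ pos v) (pos v' ++ inv u') -> rclosure u'
| rclos_den : forall u v u' v', rclosure u -> rclosure v ->
    rrev (inv u ++ pos v) (pos v' ++ inv u') -> rclosure v'.

Definition cond_Fr : Prop := exists l : list (list S), forall u, rclosure u -> In u l.

Definition cond_C : Prop :=
  forall (s : S) (u v : list S), u <> v ->
    ~ is_rel (s :: u) (s :: v) /\ ~ is_rel (u ++ [s]) (v ++ [s]).

Definition cond_Er : Prop :=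
  exists S' : list S -> Prop, (forall s, S' [s]) /\
    forall u v, S' u -> S' v ->
      exists u' v', S' u' /\ S' v' /\ rrev (inv (u ++ v') ++ pos (v ++ u')) [].

Inductive derives : nat -> sword -> sword -> Prop :=
| der_refl : forall w, derives 0 w w
| der_free_del1 : forall k x y s w, derives k (x ++ y) w ->
    derives k (x ++ [Pos s; Neg s] ++ y) w
| der_free_del2 : forall k x y s w, derives k (x ++ y) w ->
    derives k (x ++ [Neg s; Pos s] ++ y) w
| der_free_ins1 : forall k x y s w, derives k (x ++ [Pos s; Neg s] ++ y) w ->
    derives k (x ++ y) w
| der_free_ins2 : forall k x y s w, derives k (x ++ [Neg s; Pos s] ++ y) w ->
    derives k (x ++ y) w
| der_rel : forall k x y u v w, is_rel u v -> derives k (x ++ pos v ++ y) w ->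
    derives (Datatypes.S k) (x ++ pos u ++ y) w.

Definition quadratic_isoperimetric : Prop :=
  exists C : nat, forall w : sword, gequiv w [] ->
    exists k, derives k w [] /\ k <= C * (length w * length w).

End Pres.

(* Main.v *)
Require Import Defs.
From Stdlib Require Import List Lia Classical PeanoNat.
Import ListNotations.

Section Main.
Variable S : Type.
Variable R : list S -> list S -> Prop.
Notation peq := (pequiv R).

Lemma peq_app_r u v z : peq u v -> peq (u ++ z) (v ++ z).
Proof.
  induction 1.
  - apply pequiv_refl.
  - now apply pequiv_sym.
  - eapply pequiv_trans; eauto.
  - rewrite <- !app_assoc. apply pequiv_rel; auto.
Qed.

Lemma peq_app_l u v z : peq u v -> peq (z ++ u) (z ++ v).
Proof.
  induction 1.
  - apply pequiv_refl.
  - now apply pequiv_sym.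
  - eapply pequiv_trans; eauto.
  - rewrite !app_assoc. rewrite <- (app_assoc (z ++ x)), <- (app_assoc (z ++ x)).
    apply pequiv_rel; auto.
Qed.

Lemma peq_app u v u' v' : peq u u' -> peq v v' -> peq (u ++ v) (u' ++ v').
Proof.
  intros; eapply pequiv_trans. apply peq_app_r; eauto. apply peq_app_l; auto.
Qed.

Lemma peq_relw u v : is_rel R u v -> peq u v.
Proof.
  intros H. pose proof (pequiv_rel (R:=R) [] [] H). simpl in H0. now rewrite !app_nil_r in H0.
Qed.

Lemma is_rel_sym u v : is_rel R u v -> is_rel R v u.
Proof. unfold is_rel; tauto. Qed.

Lemma peq_nil (Hp : positive_relations R) u v : peq u v -> (u = [] <-> v = []).
Proof.
  induction 1; try tauto.
  assert (u <> [] /\ v <> []) as [Hu Hv].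
  { destruct H as [H|H]; apply Hp in H; tauto. }
  split; intros E; apply app_eq_nil in E as [_ E]; apply app_eq_nil in E as [E _]; tauto.
Qed.

Lemma peq_nil_l (Hp : positive_relations R) v : peq [] v -> v = [].
Proof. intros H; apply (peq_nil Hp) in H; tauto. Qed.

Lemma inv_cons (s : S) u : inv (s :: u) = inv u ++ [Neg s].
Proof. reflexivity. Qed.
Lemma inv_app (u v : list S) : inv (u ++ v) = inv v ++ inv u.
Proof. unfold inv. now rewrite map_app, rev_app_distr. Qed.
Lemma pos_app (u v : list S) : pos (u ++ v) = pos u ++ pos v.
Proof. unfold pos. now rewrite map_app. Qed.
Lemma inv_nil : inv (S:=S) [] = [].
Proof. reflexivity. Qed.
Lemma pos_nil : pos (S:=S) [] = [].
Proof. reflexivity. Qed.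

Inductive rrevn : nat -> sword S -> sword S -> Prop :=
| rn0 : forall w, rrevn 0 w w
| rnS : forall k w1 w2 w3, rrev_step R w1 w2 -> rrevn k w2 w3 -> rrevn (Datatypes.S k) w1 w3.

Lemma rrev_rrevn w w' : rrev R w w' -> exists k, rrevn k w w'.
Proof.
  induction 1. exists 0; constructor. destruct IHrrev as [k Hk]. exists (Datatypes.S k); econstructor; eauto.
Qed.

Lemma rrevn_trans k1 k2 a b c : rrevn k1 a b -> rrevn k2 b c -> rrevn (k1 + k2) a c.
Proof.
  induction 1; intros; simpl; auto. econstructor; eauto.
Qed.

Lemma step_ctx x y w w' : rrev_step R w w' -> rrev_step R (x ++ w ++ y) (x ++ w' ++ y).
Proof.
  destruct 1.
  - pose proof (@rrev_del S R (x ++ x0) (y0 ++ y) _ H) as H'.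
    rewrite <- !app_assoc. rewrite <- !app_assoc in H'. exact H'.
  - pose proof (rrev_sw (x ++ x0) (y0 ++ y) u' v' H H0 H1) as H'.
    rewrite <- !app_assoc. rewrite <- !app_assoc in H'. exact H'.
Qed.

Lemma rrevn_ctx x y k w w' : rrevn k w w' -> rrevn k (x ++ w ++ y) (x ++ w' ++ y).
Proof.
  induction 1. constructor. econstructor. apply step_ctx; eauto. auto.
Qed.
Arguments rrevn_ctx x y [k w w'] _.


Lemma der_ins_pi k x y u t : derives R k (x ++ pos u ++ inv u ++ y) t -> derives R k (x ++ y) t.
Proof.
  revert x y. induction u as [|s u IH]; intros x y H; [exact H|].
  apply (der_free_ins1 x y s).
  replace (x ++ [Pos s;Neg s] ++ y) with ((x ++ [Pos s]) ++ Neg s :: y) by (rewrite <- app_assoc; reflexivity).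
  apply IH. rewrite inv_cons in H. rewrite <- !app_assoc. rewrite <- !app_assoc in H. simpl in *. exact H.
Qed.

Lemma der_del_pi k x y u t : derives R k (x ++ y) t -> derives R k (x ++ pos u ++ inv u ++ y) t.
Proof.
  revert x y. induction u as [|s u IH]; intros x y H; [exact H|].
  pose proof (der_free_del1 x y s H) as H1.
  replace (x ++ [Pos s;Neg s] ++ y) with ((x ++ [Pos s]) ++ Neg s :: y) in H1 by (rewrite <- app_assoc; reflexivity).
  apply IH in H1. rewrite inv_cons. rewrite <- !app_assoc. rewrite <- !app_assoc in H1. simpl in *. exact H1.
Qed.

Lemma der_del_ip k x y u t : derives R k (x ++ y) t -> derives R k (x ++ inv u ++ pos u ++ y) t.
Proof.
  revert x y. induction u as [|s u IH]; intros x y H; [exact H|].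
  apply IH in H.
  replace (x ++ inv u ++ pos u ++ y) with ((x ++ inv u) ++ (pos u ++ y)) in H by (rewrite <- app_assoc; reflexivity).
  pose proof (der_free_del2 _ _ s H) as H1.
  rewrite inv_cons. rewrite <- !app_assoc. rewrite <- !app_assoc in H1. simpl in *. exact H1.
Qed.

Lemma step_der w w' m t : rrev_step R w w' -> derives R m w' t -> derives R m w t \/ derives R (Datatypes.S m) w t.
Proof.
  destruct 1 as [x y u Hu | x y u v u' v' Hu Hv Hr]; intros H.
  - left. now apply der_del_ip.
  - right.
    apply (der_del_ip _ x (pos v' ++ inv u' ++ y) u) in H.
    replace (x ++ inv u ++ pos u ++ pos v' ++ inv u' ++ y) with ((x ++ inv u) ++ pos (u ++ v') ++ (inv u' ++ y)) in H
      by (rewrite pos_app; rewrite <- !app_assoc; reflexivity).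
    pose proof (der_rel (x ++ inv u) (inv u' ++ y) (is_rel_sym _ _ Hr) H) as H1.
    replace (x ++ inv u ++ pos v ++ y) with ((x ++ inv u ++ pos v) ++ y) by (rewrite <- !app_assoc; reflexivity).
    apply (der_ins_pi _ (x ++ inv u ++ pos v) y u').
    rewrite pos_app in H1. rewrite <- !app_assoc. rewrite <- !app_assoc in H1. exact H1.
Qed.

Lemma rrevn_der k w w' : rrevn k w w' -> forall m t, derives R m w' t -> exists j, j <= k /\ derives R (j + m) w t.
Proof.
  induction 1 as [|k w1 w2 w3 Hs Hr IH]; intros m t Hd0.
  - exists 0; split; auto.
  - destruct (IH m t Hd0) as [j [Hj Hd]].
    destruct (step_der _ _ (j + m) t Hs Hd) as [Hd'|Hd'].
    + exists j; split; [lia|auto].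
    + exists (Datatypes.S j); split; [lia|auto].
Qed.


Lemma inv_map (b : list S) : inv b = map (@Neg S) (rev b).
Proof. unfold inv. now rewrite map_rev. Qed.

Lemma np_inj (p q p' q' : list S) : map (@Neg S) p ++ map (@Pos S) q = map (@Neg S) p' ++ map (@Pos S) q' -> p = p' /\ q = q'.
Proof.
  revert p'. induction p as [|a p IH]; intros [|a' p'] E; simpl in E.
  - split; auto. revert q' E. induction q as [|b q IHq]; intros [|b' q'] E; simpl in E; try discriminate; auto.
    injection E as E1 E2. subst. f_equal. auto.
  - destruct q; simpl in E; discriminate.
  - destruct q'; simpl in E; discriminate.
  - injection E as E1 E2. subst. apply IH in E2 as [-> ->]. auto.
Qed.

Lemma pn_inj (p q p' q' : list S) : map (@Pos S) p ++ map (@Neg S) q = map (@Pos S) p' ++ map (@Neg S) q' -> p = p' /\ q = q'.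
Proof.
  revert p'. induction p as [|a p IH]; intros [|a' p'] E; simpl in E.
  - split; auto. revert q' E. induction q as [|b q IHq]; intros [|b' q'] E; simpl in E; try discriminate; auto.
    injection E as E1 E2. subst. f_equal. auto.
  - destruct q; simpl in E; discriminate.
  - destruct q'; simpl in E; discriminate.
  - injection E as E1 E2. subst. apply IH in E2 as [-> ->]. auto.
Qed.

Lemma rev_inj (a b : list S) : rev a = rev b -> a = b.
Proof. intros E. rewrite <- (rev_involutive a), <- (rev_involutive b). now rewrite E. Qed.

Lemma pi_inj (a b c d : list S) : pos a ++ inv b = pos c ++ inv d -> a = c /\ b = d.
Proof.
  rewrite !inv_map. unfold pos. intros E. apply pn_inj in E as [E1 E2]. split; auto. now apply rev_inj.
Qed.

Lemma ip_inj (a b c d : list S) : inv a ++ pos b = inv c ++ pos d -> a = c /\ b = d.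
Proof.
  rewrite !inv_map. unfold pos. intros E. apply np_inj in E as [E1 E2]. split; auto. now apply rev_inj.
Qed.

Lemma no_np (p q : list S) x y s t : map (@Pos S) p ++ map (@Neg S) q <> x ++ Neg s :: Pos t :: y.
Proof.
  revert x. induction p as [|a p IH]; intros x E; simpl in E.
  - assert (In (Pos t) (map (@Neg S) q)) as H.
    { rewrite E. apply in_app_iff. right. right. left. auto. }
    apply in_map_iff in H as [z [Hz _]]. discriminate.
  - destruct x as [|c x]; simpl in E; injection E as E1 E2; [discriminate|]. eapply IH; eauto.
Qed.

Lemma no_pn (p q : list S) x y s t : map (@Neg S) p ++ map (@Pos S) q <> x ++ Pos s :: Neg t :: y.
Proof.
  revert x. induction p as [|a p IH]; intros x E; simpl in E.
  - assert (In (Neg t) (map (@Pos S) q)) as H.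
    { rewrite E. apply in_app_iff. right. right. left. auto. }
    apply in_map_iff in H as [z [Hz _]]. discriminate.
  - destruct x as [|c x]; simpl in E; injection E as E1 E2; [discriminate|]. eapply IH; eauto.
Qed.

Lemma step_np w w' : rrev_step R w w' -> exists x y s t, w = x ++ Neg s :: Pos t :: y.
Proof.
  destruct 1 as [x y u Hu | x y u v u' v' Hu Hv Hr].
  - destruct u as [|s u]; [congruence|].
    exists (x ++ inv u), (pos u ++ y), s, s. rewrite inv_cons. rewrite <- !app_assoc. reflexivity.
  - destruct u as [|s u]; [congruence|]. destruct v as [|t v]; [congruence|].
    exists (x ++ inv u), (pos v ++ y), s, t. rewrite inv_cons. rewrite <- !app_assoc. reflexivity.
Qed.

Lemma lstep_pn w w' : lrev_step R w w' -> exists x y s t, w = x ++ Pos s :: Neg t :: y.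
Proof.
  destruct 1 as [x y u Hu | x y u v u' v' Hu Hv Hr].
  - destruct (exists_last Hu) as [u0 [c ->]].
    exists (x ++ pos u0), (inv u0 ++ y), c, c.
    rewrite pos_app, inv_app. rewrite <- !app_assoc. reflexivity.
  - destruct (exists_last Hu) as [u0 [c ->]]. destruct (exists_last Hv) as [v0 [d ->]].
    exists (x ++ pos u0), (inv v0 ++ y), c, d.
    rewrite pos_app, inv_app. rewrite <- !app_assoc. reflexivity.
Qed.

Lemma rrev_terminal (a b : list S) t : rrev R (pos a ++ inv b) t -> t = pos a ++ inv b.
Proof.
  intros H. inversion H; subst; auto.
  apply step_np in H0 as [x [y [s [t' E]]]].
  exfalso. rewrite inv_map in E. eapply no_np; eauto.
Qed.

Lemma lrev_terminal (a b : list S) t : lrev R (inv a ++ pos b) t -> t = inv a ++ pos b.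
Proof.
  intros H. inversion H; subst; auto.
  apply lstep_pn in H0 as [x [y [s [t' E]]]].
  exfalso. rewrite inv_map in E. eapply no_pn; eauto.
Qed.

Lemma len_inv (u : list S) : length (inv u) = length u.
Proof. unfold inv. now rewrite length_rev, length_map. Qed.
Lemma len_pos (u : list S) : length (pos u) = length u.
Proof. unfold pos. now rewrite length_map. Qed.

Lemma split2r x y u v (l1 l2 : sletter S) : u <> [] -> v <> [] -> x ++ inv u ++ pos v ++ y = [l1; l2] ->
  x = [] /\ y = [] /\ exists c d, u = [c] /\ v = [d] /\ l1 = Neg c /\ l2 = Pos d.
Proof.
  intros Hu Hv E.
  assert (EL := f_equal (@length _) E). rewrite !length_app, len_inv, len_pos in EL. simpl in EL.
  destruct u as [|c u]; [congruence|]. destruct v as [|d v]; [congruence|]. simpl in EL.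
  destruct u; [|simpl in EL; lia]. destruct v; [|simpl in EL; lia].
  destruct x; [|simpl in EL; lia]. destruct y; [|simpl in EL; lia].
  simpl in E. injection E as E1 E2. repeat split; auto. exists c, d; auto.
Qed.

Lemma split2l x y u v (l1 l2 : sletter S) : u <> [] -> v <> [] -> x ++ pos u ++ inv v ++ y = [l1; l2] ->
  x = [] /\ y = [] /\ exists c d, u = [c] /\ v = [d] /\ l1 = Pos c /\ l2 = Neg d.
Proof.
  intros Hu Hv E.
  assert (EL := f_equal (@length _) E). rewrite !length_app, len_inv, len_pos in EL. simpl in EL.
  destruct u as [|c u]; [congruence|]. destruct v as [|d v]; [congruence|]. simpl in EL.
  destruct u; [|simpl in EL; lia]. destruct v; [|simpl in EL; lia].
  destruct x; [|simpl in EL; lia]. destruct y; [|simpl in EL; lia].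
  simpl in E. injection E as E1 E2. repeat split; auto. exists c, d; auto.
Qed.

Lemma rev_ss (HC : cond_C R) s a b : rrev R [Neg s; Pos s] (pos a ++ inv b) -> a = b.
Proof.
  intros H. remember [Neg s; Pos s] as w0 eqn:Ew. remember (pos a ++ inv b) as w3 eqn:E3.
  destruct H as [w|w1 w2 w3 Hs Hr]; subst.
  - exfalso. rename E3 into E. rewrite inv_map in E. destruct a as [|c a]; simpl in E.
    + assert (In (Pos s) (map (@Neg S) (rev b))) as Hi by (rewrite <- E; simpl; auto).
      apply in_map_iff in Hi as [z [Hz _]]. discriminate.
    + injection E as E1 E2. discriminate.
  - inversion Hs as [x y u Hu E1 E2|x y u v u' v' Hu Hv Hrel E1 E2]; subst.
    + apply split2r in E1 as [-> [-> [c [d [-> [Hd [E3 E4]]]]]]]; auto.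
      simpl in Hr. change (@nil (sletter S)) with (pos (S:=S) [] ++ inv []) in Hr.
      apply rrev_terminal in Hr. apply pi_inj in Hr as [-> ->]. auto.
    + apply split2r in E1 as [-> [-> [c [d [-> [-> [E3 E4]]]]]]]; auto.
      injection E3 as ->. injection E4 as ->.
      simpl in Hr. rewrite ?app_nil_r in Hr. apply rrev_terminal in Hr. apply pi_inj in Hr as [-> ->].
      destruct (classic (v' = u')) as [->|Hne]; auto.
      exfalso. apply (proj1 (HC d v' u' Hne)). exact Hrel.
Qed.

Lemma lev_ss (HC : cond_C R) s a b : lrev R [Pos s; Neg s] (inv a ++ pos b) -> a = b.
Proof.
  intros H. remember [Pos s; Neg s] as w0 eqn:Ew. remember (inv a ++ pos b) as w3 eqn:E3.
  destruct H as [w|w1 w2 w3 Hs Hr]; subst.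
  - exfalso. rename E3 into E. rewrite inv_map in E. destruct (rev a) as [|c a'] eqn:Ea; simpl in E.
    + unfold pos in E. destruct b; simpl in E; [discriminate|]. injection E as E1 E2.
      destruct b; simpl in E2; [discriminate|]. injection E2 as E2 _. discriminate.
    + injection E as E1 E2. discriminate.
  - inversion Hs as [x y u Hu E1 E2|x y u v u' v' Hu Hv Hrel E1 E2]; subst.
    + apply split2l in E1 as [-> [-> [c [d [-> [Hd [E3 E4]]]]]]]; auto.
      simpl in Hr. change (@nil (sletter S)) with (inv (S:=S) [] ++ pos []) in Hr.
      apply lrev_terminal in Hr. apply ip_inj in Hr as [-> ->]. auto.
    + apply split2l in E1 as [-> [-> [c [d [-> [-> [E3 E4]]]]]]]; auto.
      injection E3 as ->. injection E4 as ->.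
      simpl in Hr. rewrite ?app_nil_r in Hr. apply lrev_terminal in Hr. apply ip_inj in Hr as [-> ->].
      destruct (classic (v' = u')) as [->|Hne]; auto.
      exfalso. apply (proj2 (HC d v' u' Hne)). exact Hrel.
Qed.

Lemma lcancel1 (Hc : r_complete R) (HC : cond_C R) s u v : peq (s :: u) (s :: v) -> peq u v.
Proof.
  intros H. destruct (Hc [s] [s] v u H) as [u'' [v'' [w [Hr [E1 E2]]]]].
  simpl in Hr. apply rev_ss in Hr; auto. subst.
  eapply pequiv_trans; [exact E2|]. now apply pequiv_sym.
Qed.

Lemma rcancel1 (Hc : l_complete R) (HC : cond_C R) s u v : peq (u ++ [s]) (v ++ [s]) -> peq u v.
Proof.
  intros H. destruct (Hc [s] [s] v u H) as [u'' [v'' [w [Hr [E1 E2]]]]].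
  simpl in Hr. apply lev_ss in Hr; auto. subst.
  eapply pequiv_trans; [exact E2|]. now apply pequiv_sym.
Qed.

Lemma lcancel (Hc : r_complete R) (HC : cond_C R) a u v : peq (a ++ u) (a ++ v) -> peq u v.
Proof.
  induction a as [|s a IH]; simpl; auto. intros H. apply IH. eapply lcancel1; eauto.
Qed.

Lemma rcancel (Hc : l_complete R) (HC : cond_C R) a u v : peq (u ++ a) (v ++ a) -> peq u v.
Proof.
  revert u v. induction a as [|s a IH]; intros u v H.
  - now rewrite !app_nil_r in H.
  - eapply rcancel1; eauto. apply IH. rewrite <- !app_assoc. exact H.
Qed.


Fixpoint P (w : sword S) (a b : list S) : Prop :=
  match w with
  | [] => peq a b
  | Pos s :: w' => exists a1, peq a (s :: a1) /\ P w' a1 b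
  | Neg s :: w' => P w' (s :: a) b
  end.

Lemma P_resp w a a' b : peq a a' -> P w a b -> P w a' b.
Proof.
  revert a a'. induction w as [|[s|s] w IH]; intros a a' E H; simpl in *.
  - eapply pequiv_trans; [apply pequiv_sym; exact E| exact H].
  - destruct H as [a1 [H1 H2]]. exists a1. split; auto. eapply pequiv_trans; [apply pequiv_sym; exact E| exact H1].
  - eapply IH; [|exact H]. apply (peq_app_l _ _ [s]); auto.
Qed.

Lemma P_inv u z a b : P (inv u ++ z) a b <-> P z (u ++ a) b.
Proof.
  revert z a. induction u as [|s u IH]; intros z a; [simpl; tauto|].
  rewrite inv_cons, <- app_assoc, IH. simpl. tauto.
Qed.

Lemma P_pos v z a b : P (pos v ++ z) a b <-> exists a1, peq a (v ++ a1) /\ P z a1 b.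
Proof.
  revert a. induction v as [|s v IH]; intros a; simpl.
  - split. intros H; exists a; split; auto; apply pequiv_refl.
    intros [a1 [H1 H2]]. eapply P_resp; [apply pequiv_sym; exact H1|exact H2].
  - split.
    + intros [a1 [H1 H2]]. apply IH in H2 as [a2 [H3 H4]]. exists a2. split; auto.
      eapply pequiv_trans; [exact H1|]. apply (peq_app_l _ _ [s]); auto.
    + intros [a2 [H1 H2]]. exists (v ++ a2). split; auto. apply IH. exists a2; split; auto. apply pequiv_refl.
Qed.

Lemma P_ctx x z z' : (forall a b, P z' a b -> P z a b) -> forall a b, P (x ++ z') a b -> P (x ++ z) a b.
Proof.
  intros H. induction x as [|[s|s] x IH]; intros a b Hx; simpl in *; auto.
  destruct Hx as [a1 [H1 H2]]. exists a1; split; auto.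
Qed.

Lemma P_step w w' : rrev_step R w w' -> forall a b, P w' a b -> P w a b.
Proof.
  destruct 1 as [x y u Hu | x y u v u' v' Hu Hv Hr]; apply P_ctx.
  - intros a b H. apply P_inv. apply P_pos. exists a. split; auto. apply pequiv_refl.
  - intros a b H. apply P_pos in H as [a1 [H1 H2]]. apply P_inv in H2.
    apply P_inv. apply P_pos. exists (u' ++ a1). split; auto.
    eapply pequiv_trans. apply peq_app_l. exact H1.
    rewrite !app_assoc. apply peq_app_r. apply peq_relw. exact Hr.
Qed.

Lemma P_rrevn k w w' : rrevn k w w' -> forall a b, P w' a b -> P w a b.
Proof.
  induction 1; auto. intros a b H1. eapply P_step; eauto.
Qed.

Lemma P_rrev w w' : rrev R w w' -> forall a b, P w' a b -> P w a b.
Proof.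
  induction 1; auto. intros a b H1. eapply P_step; eauto.
Qed.

Lemma P_pi v u : P (pos v ++ inv u) v u.
Proof.
  apply P_pos. exists []. rewrite app_nil_r. split; [apply pequiv_refl|].
  rewrite <- (app_nil_r (inv u)). apply P_inv. simpl. rewrite app_nil_r. apply pequiv_refl.
Qed.

Definition approx a b a' b' := exists X Y, peq (a ++ X) (a' ++ Y) /\ peq (b ++ X) (b' ++ Y).

Lemma approx_sym a b a' b' : approx a b a' b' -> approx a' b' a b.
Proof. intros [X [Y [H1 H2]]]. exists Y, X. split; now apply pequiv_sym. Qed.

Section WithCM.
Hypothesis CM : forall u v : list S, exists c d, peq (u ++ d) (v ++ c).
Hypothesis Hrc : r_complete R.
Hypothesis Hlc : l_complete R.
Hypothesis HC : cond_C R.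

Lemma approx_trans a b c d e f : approx a b c d -> approx c d e f -> approx a b e f.
Proof.
  intros [X [Y [H1 H2]]] [X' [Y' [H3 H4]]].
  destruct (CM Y X') as [Z' [Z HZ]].
  exists (X ++ Z), (Y' ++ Z'). split.
  - eapply pequiv_trans. rewrite app_assoc. apply peq_app_r. exact H1.
    rewrite <- app_assoc. eapply pequiv_trans. apply peq_app_l. exact HZ.
    rewrite !app_assoc. apply peq_app_r. exact H3.
  - eapply pequiv_trans. rewrite app_assoc. apply peq_app_r. exact H2.
    rewrite <- app_assoc. eapply pequiv_trans. apply peq_app_l. exact HZ.
    rewrite !app_assoc. apply peq_app_r. exact H4.
Qed.

Definition Q z z' := forall a b a' b', P z a b -> P z' a' b' -> approx a b a' b'.

Lemma Q_nil : Q [] [].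
Proof.
  intros a b a' b' H1 H2; simpl in *. destruct (CM a a') as [c [d H]].
  exists d, c. split; auto.
  eapply pequiv_trans. apply peq_app_r. apply pequiv_sym. exact H1.
  eapply pequiv_trans. exact H. apply peq_app_r. exact H2.
Qed.

Lemma Q_ctx x z z' : Q z z' -> Q (x ++ z) (x ++ z').
Proof.
  intros HQ. induction x as [|[s|s] x IH]; simpl; auto.
  - intros a b a' b' [a1 [H1 H2]] [a1' [H3 H4]].
    destruct (IH _ _ _ _ H2 H4) as [X [Y [H5 H6]]]. exists X, Y. split; auto.
    eapply pequiv_trans. apply peq_app_r. exact H1.
    eapply pequiv_trans; [|apply peq_app_r; apply pequiv_sym; exact H3].
    apply (peq_app_l _ _ [s]). exact H5.
  - intros a b a' b' H1 H2.
    destruct (IH _ _ _ _ H1 H2) as [X [Y [H5 H6]]]. exists X, Y. split; auto.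
    eapply lcancel1; eauto.
Qed.

Lemma Q_refl w : Q w w.
Proof. rewrite <- (app_nil_r w). apply Q_ctx, Q_nil. Qed.

Lemma Q_sym z z' : Q z z' -> Q z' z.
Proof. intros H a b a' b' H1 H2. apply approx_sym. eauto. Qed.

Lemma Q_pos u v z : peq u v -> Q (pos u ++ z) (pos v ++ z).
Proof.
  intros E a b a' b' H1 H2. apply P_pos in H1 as [a1 [H1 H1']]. apply P_pos in H2 as [a2 [H2 H2']].
  destruct (Q_refl z _ _ _ _ H1' H2') as [X [Y [H5 H6]]]. exists X, Y. split; auto.
  eapply pequiv_trans. apply peq_app_r. exact H1.
  eapply pequiv_trans; [|apply peq_app_r; apply pequiv_sym; exact H2].
  rewrite <- !app_assoc. eapply pequiv_trans. apply peq_app_l. exact H5.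
  apply peq_app_r. exact E.
Qed.

Lemma Q_free1 s y : Q ([Pos s; Neg s] ++ y) y.
Proof.
  intros a b a' b' [a1 [H1 H2]] H3.
  destruct (Q_refl y _ _ _ _ H2 H3) as [X [Y [H5 H6]]]. exists X, Y. split; auto.
  eapply pequiv_trans; [|exact H5]. apply peq_app_r. exact H1.
Qed.

Lemma Q_free2 s y : Q ([Neg s; Pos s] ++ y) y.
Proof.
  intros a b a' b' [a1 [H1 H2]] H3.
  apply lcancel1 in H1; auto.
  destruct (Q_refl y _ _ _ _ H2 H3) as [X [Y [H5 H6]]]. exists X, Y. split; auto.
  eapply pequiv_trans; [|exact H5]. apply peq_app_r. exact H1.
Qed.

Hypothesis Ptot : forall w, exists a b, P w a b.

Lemma gequiv_Q w w' : gequiv R w w' -> Q w w'.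
Proof.
  induction 1.
  - apply Q_refl.
  - now apply Q_sym.
  - intros a b a' b' H1 H2. destruct (Ptot w2) as [c [d Hcd]].
    eapply approx_trans; [eapply IHgequiv1; eauto | eapply IHgequiv2; eauto].
  - apply Q_ctx. apply Q_pos. now apply peq_relw.
  - apply Q_ctx. apply Q_free1.
  - apply Q_ctx. apply Q_free2.
Qed.

Lemma embed w v u : gequiv R w [] -> P w v u -> peq v u.
Proof.
  intros G H. destruct (gequiv_Q _ _ G _ _ _ _ H (pequiv_refl R [])) as [X [Y [H1 H2]]].
  apply (rcancel Hlc HC X). eapply pequiv_trans. exact H1. apply pequiv_sym. exact H2.
Qed.

End WithCM.


Lemma P_ip_nil a b : P (inv a ++ pos b) [] [] -> peq a b.
Proof.
  intros H. apply P_inv in H. rewrite <- (app_nil_r (pos b)) in H. apply P_pos in H as [a1 [H1 H2]].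
  simpl in H2. rewrite app_nil_r in H1. eapply pequiv_trans. exact H1.
  rewrite <- (app_nil_r b) at 2. apply peq_app_l. exact H2.
Qed.

Lemma concat_single (u : list S) : concat (map (fun s => [s]) u) = u.
Proof. induction u; simpl; congruence. Qed.

Lemma cm_from_Er (HE : cond_Er R) : forall u v : list S, exists c d, peq (u ++ d) (v ++ c).
Proof.
  destruct HE as [S' [HS1 HS2]].
  assert (cell : forall u v, S' u -> S' v -> exists u' v', S' u' /\ S' v' /\ peq (u ++ v') (v ++ u')).
  { intros u v Hu Hv. destruct (HS2 u v Hu Hv) as [u' [v' [H1 [H2 H3]]]]. exists u', v'. repeat split; auto.
    apply P_ip_nil. eapply P_rrev; [exact H3|]. simpl. apply pequiv_refl. }
  assert (row : forall B, Forall S' B -> forall a, S' a -> exists a2 B2, S' a2 /\ Forall S' B2 /\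
      peq (a ++ concat B2) (concat B ++ a2)).
  { induction B as [|b1 B1 IH]; intros HB a Ha.
    - exists a, []. simpl. rewrite app_nil_r. repeat split; auto. apply pequiv_refl.
    - inversion HB; subst. destruct (cell a b1 Ha H1) as [a1 [b1' [Ha1 [Hb1' E]]]].
      destruct (IH H2 a1 Ha1) as [a2 [B2 [Ha2 [HB2 E2]]]].
      exists a2, (b1' :: B2). repeat split; auto. simpl.
      rewrite app_assoc. eapply pequiv_trans. apply peq_app_r. exact E.
      rewrite <- !app_assoc. apply peq_app_l. exact E2. }
  assert (grid : forall A B, Forall S' A -> Forall S' B -> exists A2 B2, Forall S' A2 /\ Forall S' B2 /\
      peq (concat A ++ concat B2) (concat B ++ concat A2)).
  { induction A as [|a A1 IH]; intros B HA HB.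
    - exists [], B. simpl. rewrite app_nil_r. repeat split; auto. apply pequiv_refl.
    - inversion HA; subst. destruct (row B HB a H1) as [a2 [B1 [Ha2 [HB1 E1]]]].
      destruct (IH B1 H2 HB1) as [A2 [B2 [HA2 [HB2 E2]]]].
      exists (a2 :: A2), B2. repeat split; auto. simpl.
      rewrite <- app_assoc. eapply pequiv_trans. apply peq_app_l. exact E2.
      rewrite !app_assoc. apply peq_app_r. exact E1. }
  intros u v.
  assert (Hf : forall w : list S, Forall S' (map (fun s => [s]) w)).
  { intros w. apply Forall_forall. intros x Hx. apply in_map_iff in Hx as [s [<- _]]. auto. }
  destruct (grid _ _ (Hf u) (Hf v)) as [A2 [B2 [_ [_ E]]]].
  rewrite !concat_single in E. eauto.
Qed.

Lemma fin_bound {X : Type} (l : list X) (Rel : X -> nat -> Prop) :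
  exists N, forall x, In x l -> (exists k, Rel x k) -> exists k, k <= N /\ Rel x k.
Proof.
  induction l as [|x0 l [N IH]].
  - exists 0. intros x [].
  - destruct (classic (exists k, Rel x0 k)) as [[k0 Hk0]|Hn].
    + exists (k0 + N). intros x [<-|Hx] Hk.
      * exists k0; split; [lia|auto].
      * destruct (IH x Hx Hk) as [k [Hk1 Hk2]]. exists k; split; [lia|auto].
    + exists N. intros x [<-|Hx] Hk; [tauto|]. auto.
Qed.

Lemma rrevn_eq k a b a' b' : a = a' -> b = b' -> rrevn k a b -> rrevn k a' b'.
Proof. intros -> ->; auto. Qed.

Ltac wnorm := simpl; rewrite ?pos_app, ?inv_app, ?app_nil_r, <- ?app_assoc; simpl; rewrite ?app_nil_r; reflexivity.

Section Grid.
Hypothesis Hrc : r_complete R.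
Variable N : nat.
Hypothesis HN : forall a b a2 b2, rclosure R a -> rclosure R b ->
  rrev R (inv a ++ pos b) (pos b2 ++ inv a2) -> exists k, k <= N /\ rrevn k (inv a ++ pos b) (pos b2 ++ inv a2).

Lemma RevRow B : Forall (rclosure R) B -> forall a, rclosure R a -> forall c d, peq (a ++ d) (concat B ++ c) ->
  exists a2 B2 x k, rclosure R a2 /\ Forall (rclosure R) B2 /\ length B2 = length B /\ k <= N * length B /\
    rrevn k (inv a ++ pos (concat B)) (pos (concat B2) ++ inv a2) /\ peq c (a2 ++ x) /\ peq d (concat B2 ++ x).
Proof.
  induction B as [|b1 B1 IH]; intros HB a Ha c d H.
  - exists a, [], d, 0. repeat split; try (simpl in *; nia); auto.
    + eapply rrevn_eq; [| |apply rn0]; wnorm.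
    + apply pequiv_sym. exact H.
    + apply pequiv_refl.
  - inversion HB as [|? ? Hb1 HB1]; subst.
    simpl in H. rewrite <- app_assoc in H.
    destruct (Hrc a b1 _ _ H) as [u2 [v2 [w [Hr [E1 E2]]]]].
    destruct (HN _ _ _ _ Ha Hb1 Hr) as [k1 [Hk1 Hr1]].
    assert (Hu2 : rclosure R u2) by exact (rclos_num u2 v2 Ha Hb1 Hr).
    assert (Hv2 : rclosure R v2) by exact (rclos_den u2 v2 Ha Hb1 Hr).
    destruct (IH HB1 u2 Hu2 c w (pequiv_sym E1)) as [a2 [B2 [x [k2 [Ha2 [HB2 [HL [Hk2 [Hr2 [E3 E4]]]]]]]]]].
    exists a2, (v2 :: B2), x, (k1 + k2). repeat split; try (simpl in *; nia); auto.
    + eapply rrevn_trans.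
      * eapply rrevn_eq; [| |exact (rrevn_ctx [] (pos (concat B1)) Hr1)]; wnorm.
      * eapply rrevn_eq; [| |exact (rrevn_ctx (pos v2) [] Hr2)]; wnorm.
    + simpl. rewrite <- app_assoc. eapply pequiv_trans. exact E2. apply peq_app_l. exact E4.
Qed.

Lemma RevGrid A : Forall (rclosure R) A -> forall B, Forall (rclosure R) B -> forall c d,
  peq (concat A ++ d) (concat B ++ c) ->
  exists A2 B2 x k, Forall (rclosure R) A2 /\ Forall (rclosure R) B2 /\ length A2 = length A /\
    length B2 = length B /\ k <= N * length A * length B /\
    rrevn k (inv (concat A) ++ pos (concat B)) (pos (concat B2) ++ inv (concat A2)) /\
    peq c (concat A2 ++ x) /\ peq d (concat B2 ++ x).
Proof.
  induction A as [|a A1 IH]; intros HA B HB c d H.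
  - exists [], B, c, 0. repeat split; try (simpl in *; nia); auto.
    + eapply rrevn_eq; [| |apply rn0]; wnorm.
    + apply pequiv_refl.
  - inversion HA as [|? ? Ha HA1]; subst.
    simpl in H. rewrite <- app_assoc in H.
    destruct (RevRow _ HB _ Ha _ _ H) as [a2 [B1 [x1 [k1 [Ha2 [HB1 [HL1 [Hk1 [Hr1 [E1 E2]]]]]]]]]].
    destruct (IH HA1 B1 HB1 x1 d E2) as [A2 [B2 [x [k2 [HA2 [HB2 [HLA [HLB [Hk2 [Hr2 [E3 E4]]]]]]]]]]].
    exists (a2 :: A2), B2, x, (k1 + k2). repeat split; try (simpl in *; nia); auto.
    + eapply rrevn_trans.
      * eapply rrevn_eq; [| |exact (rrevn_ctx (inv (concat A1)) [] Hr1)]; wnorm.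
      * eapply rrevn_eq; [| |exact (rrevn_ctx [] (inv a2) Hr2)]; wnorm.
    + simpl. eapply pequiv_trans. exact E1. rewrite <- app_assoc. apply peq_app_l. exact E3.
Qed.

Hypothesis CM : forall u v : list S, exists c d, peq (u ++ d) (v ++ c).

Lemma Reduce w : exists V U k, Forall (rclosure R) V /\ Forall (rclosure R) U /\
  length V + length U = length w /\ k <= N * length w * length w /\
  rrevn k w (pos (concat V) ++ inv (concat U)).
Proof.
  induction w as [|[s|s] w IH].
  - exists [], [], 0. repeat split; try (simpl in *; nia); auto. simpl. apply rn0.
  - destruct IH as [V [U [k [HV [HU [HL [Hk Hr]]]]]]].
    exists ([s] :: V), U, k. repeat split; try (simpl in *; nia); auto.
    + constructor; auto. apply rclos_letter.
    + eapply rrevn_eq; [| |exact (rrevn_ctx [Pos s] [] Hr)]; wnorm.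
  - destruct IH as [V [U [k [HV [HU [HL [Hk Hr]]]]]]].
    destruct (CM [s] (concat V)) as [c [d Hcd]].
    assert (HA : Forall (rclosure R) [[s]]) by (constructor; [apply rclos_letter|constructor]).
    assert (Hcd' : peq (concat [[s]] ++ d) (concat V ++ c)) by (simpl; exact Hcd).
    destruct (RevGrid _ HA _ HV _ _ Hcd') as [A2 [B2 [x [k2 [HA2 [HB2 [HLA [HLB [Hk2 [Hr2 _]]]]]]]]]].
    exists B2, (U ++ A2), (k + k2). repeat split; try (simpl in *; nia); auto.
    + apply Forall_app; auto.
    + rewrite length_app. simpl in *. lia.
    + eapply rrevn_trans.
      * eapply rrevn_eq; [| |exact (rrevn_ctx [Neg s] [] Hr)]; wnorm.
      * eapply rrevn_eq; [| |exact (rrevn_ctx [] (inv (concat U)) Hr2)].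
        -- simpl. rewrite ?app_nil_r. reflexivity.
        -- rewrite concat_app. wnorm.
Qed.

End Grid.


Lemma Nbound (HF : cond_Fr R) : exists N, forall a b a2 b2, rclosure R a -> rclosure R b ->
  rrev R (inv a ++ pos b) (pos b2 ++ inv a2) -> exists k, k <= N /\ rrevn k (inv a ++ pos b) (pos b2 ++ inv a2).
Proof.
  destruct HF as [l Hl].
  destruct (fin_bound (list_prod (list_prod (list_prod l l) l) l)
    (fun q k => match q with (a, b, a2, b2) => rrevn k (inv a ++ pos b) (pos b2 ++ inv a2) end)) as [N HN].
  exists N. intros a b a2 b2 Ha Hb Hr.
  assert (Ha2 : rclosure R a2) by exact (rclos_num a2 b2 Ha Hb Hr).
  assert (Hb2 : rclosure R b2) by exact (rclos_den a2 b2 Ha Hb Hr).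
  apply (HN (a, b, a2, b2)).
  - repeat apply in_prod; auto.
  - now apply rrev_rrevn.
Qed.

Lemma main_inner (Hp : positive_relations R) (Hc : complete R) (HF : cond_Fr R) (HC : cond_C R) (HE : cond_Er R) :
  quadratic_isoperimetric R.
Proof.
  destruct Hc as [Hrc Hlc].
  pose proof (cm_from_Er HE) as CM.
  destruct (Nbound HF) as [N HN].
  exists (2 * N). intros w G.
  destruct (Reduce Hrc _ HN CM w) as [V [U [k1 [HV [HU [HL [Hk1 Hr1]]]]]]].
  assert (Ptot : forall w, exists a b, P w a b).
  { intros w0. destruct (Reduce Hrc _ HN CM w0) as [V0 [U0 [k0 [_ [_ [_ [_ Hr0]]]]]]].
    exists (concat V0), (concat U0). eapply P_rrevn; [exact Hr0|]. apply P_pi. }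
  assert (Evu : peq (concat V) (concat U)).
  { apply (embed CM Hrc Hlc HC Ptot _ _ _ G). eapply P_rrevn; [exact Hr1|]. apply P_pi. }
  assert (Huv : peq (concat U ++ []) (concat V ++ [])) by (rewrite !app_nil_r; now apply pequiv_sym).
  destruct (RevGrid Hrc _ HN _ HU _ HV _ _ Huv) as [A2 [B2 [x [k3 [_ [_ [HLA [HLB [Hk3 [Hr3 [E3 E4]]]]]]]]]]].
  apply (peq_nil_l Hp) in E3. apply (peq_nil_l Hp) in E4.
  apply app_eq_nil in E3 as [E3 _]. apply app_eq_nil in E4 as [E4 _].
  rewrite E3, E4 in Hr3.
  set (u := concat U) in *. set (v := concat V) in *.
  assert (D0 : derives R 0 (pos u ++ inv u) []).
  { pose proof (der_del_pi 0 [] [] u [] (der_refl R [])) as D. simpl in D. rewrite app_nil_r in D. exact D. }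
  pose proof (rrevn_ctx (pos u) (inv u) Hr3) as Hr3'.
  assert (Hr3'' : rrevn k3 (pos u ++ (inv u ++ pos v) ++ inv u) (pos u ++ inv u)) by
    (eapply rrevn_eq; [| |exact Hr3']; reflexivity).
  destruct (rrevn_der _ _ _ Hr3'' _ _ D0) as [j3 [Hj3 D3]].
  rewrite Nat.add_0_r in D3.
  assert (D3' : derives R j3 (pos v ++ inv u) []).
  { apply (der_ins_pi j3 [] (pos v ++ inv u) u []). simpl. rewrite <- !app_assoc in D3. exact D3. }
  destruct (rrevn_der _ _ _ Hr1 _ _ D3') as [j1 [Hj1 D1]].
  exists (j1 + j3). split; auto.
  assert (length U <= length w) by lia. assert (length V <= length w) by lia.
  assert (N * length U * length V <= N * length w * length w).
  { apply Nat.mul_le_mono; auto. apply Nat.mul_le_mono_l; auto. }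
  nia.
Qed.

End Main.

Theorem proposition7p7 (S : Type) (R : list S -> list S -> Prop) :
  inhabited S ->
  positive_relations R ->
  complete R ->
  cond_Fr R ->
  cond_C R ->
  cond_Er R ->
  quadratic_isoperimetric R.
Proof.
  intros _. apply main_inner.
Qed.
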